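(* Let $C(\mathbf{x})$ be a $\Sigma\Pi\Sigma$ circuit of formal degree $d$ and top fan-in $s$. Then for every $k$ and every partition of $\mathbf{x}$ into $\mathbf{y}$ and $\mathbf{z}$, $\Gamma^{\mathrm{SED}}_{k,0}(C)\le s\cdot 2^d$.
   Context: A $\Sigma\Pi\Sigma$ circuit computes $\sum_{i=1}^{s}\prod_{j=1}^{d_i}L_{i,j}$ with each $L_{i,j}$ an affine form; $s$ is its top fan-in and $\max_i d_i$ its formal degree. For a partition $\mathbf{x}=\mathbf{y}\sqcup\mathbf{z}$ with $|\mathbf{y}|=n_y$, $|\mathbf{z}|=n_z$, the shifted evaluation dimension of a polynomial $P$ is $\Gamma^{\mathrm{SED}}_{k,\ell}(P)=\dim \mathrm{Span}\{\mathrm{Eval}_{\{0,1\}^{n_z}}(m\cdot P(\mathbf{a},\mathbf{z})) : m$ a monomial of degree exactly $\ell$ in $\mathbf{z},\ \mathbf{a}\in\{0,1\}^{n_y}$ with at most $k$ ones$\}$, where $\mathrm{Eval}_{\{0,1\}^{n_z}}(f)$ is the vector of values of $f$ on $\{0,1\}^{n_z}$; $\Gamma^{\mathrm{SED}}_{k,0}(C)$ means this quantity for the polynomial computed by $C$. *)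

(* Defs.v *)
From HB Require Import structures.
From mathcomp Require Import all_boot all_order all_algebra.
Unset Printing Implicit Defensive.
Import GRing.Theory.
Local Open Scope ring_scope.

Section SPS.
Variables (F : fieldType) (n : nat).

Record affine := Affine { acoef : {ffun 'I_n -> F}; aconst : F }.

Definition aeval (L : affine) (x : 'I_n -> F) : F :=
  \sum_(i < n) acoef L i * x i + aconst L.

Record sps := SPS {
  top_fanin : nat;
  mult_deg : 'I_top_fanin -> nat;
  forms : forall i : 'I_top_fanin, 'I_(mult_deg i) -> affine }.

Definition formal_degree (C : sps) : nat := (\max_(i < top_fanin C) mult_deg C i)%N.

Definition ceval (C : sps) (x : 'I_n -> F) : F :=
  \sum_(i < top_fanin C) \prod_(j < mult_deg C i) aeval (forms C i j) x.

Variable S : {set 'I_n}.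
Definition yvar := {i : 'I_n | i \in S}.
Definition zvar := {i : 'I_n | i \notin S}.

(* the point (a, b) with y := a and z := b *)
Definition merge (a : {ffun yvar -> bool}) (b : {ffun zvar -> bool}) (i : 'I_n) : bool :=
  match (insub i : option yvar) with
  | Some j => a j
  | None => match (insub i : option zvar) with Some j => b j | None => false end
  end.

(* monomials in z of degree exactly l, given by their exponent vectors *)
Definition zmonomials (l : nat) : seq {ffun zvar -> 'I_l.+1} :=
  [seq m : {ffun zvar -> 'I_l.+1} <- enum {ffun zvar -> 'I_l.+1} | (\sum_j nat_of_ord (m j))%N == l].

Definition yassign (k : nat) : seq {ffun yvar -> bool} :=
  [seq a : {ffun yvar -> bool} <- enum {ffun yvar -> bool} | #|[set j | a j]| <= k]%N.

(* Eval_{{0,1}^{n_z}} (m * C(a, z)) *)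
Definition sed_vec (C : sps) (l : nat) (m : {ffun zvar -> 'I_l.+1})
  (a : {ffun yvar -> bool}) : {ffun {ffun zvar -> bool} -> F^o} :=
  [ffun b : {ffun zvar -> bool} => (\prod_(j : zvar) ((b j)%:R : F) ^+ (m j : nat))
             * ceval C (fun i => (merge a b i)%:R)].

Definition SED (k l : nat) (C : sps) : nat :=
  \dim (span [seq sed_vec C l m a | m <- zmonomials l, a <- yassign k]).

End SPS.

Arguments Affine {F n}.
Arguments acoef {F n}.
Arguments aconst {F n}.
Arguments aeval {F n}.
Arguments SPS {F n}.
Arguments top_fanin {F n}.
Arguments mult_deg {F n}.
Arguments forms {F n}.
Arguments formal_degree {F n}.
Arguments ceval {F n}.
Arguments merge {n S}.
Arguments SED {F n}.

(* Main.v *)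
Require Import Defs.
From mathcomp Require Import all_boot all_order all_algebra.
Import GRing.Theory.

Section Aux.
Variables (F : fieldType) (n : nat) (S : {set 'I_n}).
Local Open Scope ring_scope.

Definition ypart (a : {ffun yvar n S -> bool}) (i : 'I_n) : F :=
  match (insub i : option (yvar n S)) with Some j => (a j)%:R | None => 0 end.
Definition zpart (b : {ffun zvar n S -> bool}) (i : 'I_n) : F :=
  match (insub i : option (zvar n S)) with Some j => (b j)%:R | None => 0 end.

Lemma merge_split (a : {ffun yvar n S -> bool}) (b : {ffun zvar n S -> bool}) i : ((Defs.merge a b i)%:R : F) = ypart a i + zpart b i.
Proof.
rewrite /Defs.merge /ypart /zpart.
case: insubP => [j Hj _|Hn].
  by rewrite insubF ?Hj // addr0.
by case: insub => [j|] /=; rewrite add0r.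
Qed.

Definition alpha (L : affine F n) a : F := \sum_(i < n) acoef L i * ypart a i + aconst L.
Definition beta (L : affine F n) b : F := \sum_(i < n) acoef L i * zpart b i.

Lemma aeval_split L (a : {ffun yvar n S -> bool}) (b : {ffun zvar n S -> bool}) : aeval L (fun i => (Defs.merge a b i)%:R) = alpha L a + beta L b.
Proof.
rewrite /aeval /alpha /beta.
under eq_bigr => i _ do rewrite merge_split mulrDr.
rewrite big_split /=. by rewrite -!addrA (addrC (aconst L)).
Qed.

Definition gv (C : sps F n) (i : 'I_(top_fanin C)) (f : {ffun 'I_(mult_deg C i) -> bool})
  : {ffun {ffun zvar n S -> bool} -> F^o} :=
  [ffun b => \prod_j (if f j then beta (forms C i j) b else 1)].

Definition coef (C : sps F n) (i : 'I_(top_fanin C)) (f : {ffun 'I_(mult_deg C i) -> bool}) a : F :=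
  \prod_j (if f j then 1 else alpha (forms C i j) a).

Definition G (C : sps F n) :=
  [seq gv C i f | i <- enum 'I_(top_fanin C), f <- enum {ffun 'I_(mult_deg C i) -> bool}].

Lemma sed_in (C : sps F n) m a : sed_vec F n S C 0 m a \in <<G C>>%VS.
Proof.
have -> : sed_vec F n S C 0 m a =
  \sum_(i < top_fanin C) \sum_(f : {ffun 'I_(mult_deg C i) -> bool}) coef C i f a *: gv C i f.
  apply/ffunP => b; rewrite !ffunE.
  rewrite big1 ?mul1r; last by move=> j _; case: (m j) => -[|//] ? /=; rewrite expr0.
  rewrite /ceval sum_ffunE; apply: eq_bigr => i _.
  rewrite sum_ffunE.
  under eq_bigr => j _ do rewrite aeval_split.
  have -> : \prod_(j < mult_deg C i) (alpha (forms C i j) a + beta (forms C i j) b) =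
     \prod_(j < mult_deg C i) \sum_(x : bool) (if x then beta (forms C i j) b else alpha (forms C i j) a).
    by apply: eq_bigr => j _; rewrite big_bool /= addrC.
  rewrite bigA_distr_bigA; apply: eq_bigr => f _.
  rewrite !ffunE /coef; have sc : forall x y : F, x *: (y : F^o) = x * y by []; rewrite sc; rewrite -big_split /=; apply: eq_bigr => j _.
  by case: (f j); rewrite ?mul1r ?mulr1.
apply: memv_suml => i _; apply: memv_suml => f _; apply: memvZ; apply: memv_span.
by apply: allpairs_f_dep; rewrite mem_enum.
Qed.

Lemma size_G (C : sps F n) : (size (G C) <= top_fanin C * 2 ^ formal_degree C)%N.
Proof.
rewrite /G size_allpairs_dep sumnE big_map big_enum /=.
rewrite -[X in (_ <= X * _)%N]card_ord -sum_nat_const.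
apply: leq_sum => i _; rewrite -cardE card_ffun card_bool card_ord.
by rewrite leq_pexp2l // /formal_degree (leq_bigmax i).
Qed.

End Aux.

Theorem lemma6p2 (F : fieldType) (n : nat) (C : sps F n) (d s : nat) :
  formal_degree C = d -> top_fanin C = s ->
  forall (k : nat) (S : {set 'I_n}), (SED S k 0 C <= s * 2 ^ d)%N.
Proof.
move=> <- <- k S; rewrite /SED.
apply: leq_trans (size_G F n S C).
apply: leq_trans (dim_span _).
apply: dimvS; apply/span_subvP => v /allpairsP [[m a] [_ _ ->]].
exact: sed_in.
Qed.
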